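(* Let $K\ge 2$ and positive integers $M,N,d$ with $d\le\min(M,N)$. If $d\le\min(M,N-1)$, then $(M\times N,d)^K$ is proper if and only if $((M+1)\times(N-1),d)^K$ is proper (equivalently, one is improper iff the other is). Similarly, if $d\le\min(M-1,N)$, then $(M\times N,d)^K$ is proper if and only if $((M-1)\times(N+1),d)^K$ is proper.
   Context: $(M\times N,d)^K$ is the $K$-user interference network where every transmitter has $M$ antennas, every receiver has $N$ antennas and every user demands $d$ degrees of freedom. Associate abstract variables: for each transmitter $j$ and $n\in\{1,\dots,d\}$, $M-d$ variables $x^{[j]}_{n,i}$; for each receiver $k$ and $m\in\{1,\dots,d\}$, $N-d$ variables $y^{[k]}_{m,i}$. Equations are the symbols $E^{mn}_{kj}$ for $j\ne k$, $m,n\in\{1,\dots,d\}$, with $\mathrm{var}(E^{mn}_{kj})=\{x^{[j]}_{n,i}\}_i\cup\{y^{[k]}_{m,i}\}_i$; $\mathcal E$ is the set of all equations. The system is proper if for every $S\subseteq\mathcal E$, $|S|\le\left|\bigcup_{E\in S}\mathrm{var}(E)\right|$, and improper otherwise. *)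

(* Defs.v *)
From mathcomp Require Import all_boot.
Set Implicit Arguments. Unset Strict Implicit. Unset Printing Implicit Defensive.

(* Abstract variables of (M x N, d)^K.
   inl (j, n, i) : x^{[j]}_{n,i}, j : transmitter, n < d, i < M - d
   inr (k, m, i) : y^{[k]}_{m,i}, k : receiver,    m < d, i < N - d *)
Definition ia_var (K M N d : nat) : finType :=
  (('I_K * 'I_d * 'I_(M - d)) + ('I_K * 'I_d * 'I_(N - d)))%type.

(* Equation symbols E^{mn}_{kj}, encoded as (k, j, m, n). *)
Definition ia_eqn (K d : nat) : finType := ('I_K * 'I_K * 'I_d * 'I_d)%type.

Definition ia_eqns (K d : nat) : {set ia_eqn K d} :=
  [set E : ia_eqn K d | E.1.1.1 != E.1.1.2].

Definition ia_varE (K M N d : nat) (E : ia_eqn K d) : {set ia_var K M N d} :=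
  let: (k, j, m, n) := E in
  [set (inl (j, n, i) : ia_var K M N d) | i : 'I_(M - d)]
  :|: [set (inr (k, m, i) : ia_var K M N d) | i : 'I_(N - d)].

Definition ia_proper (K M N d : nat) : Prop :=
  forall S : {set ia_eqn K d}, S \subset ia_eqns K d ->
    #|S| <= #|\bigcup_(E in S) ia_varE M N E|.

(* Main.v *)
Require Import Defs.
From mathcomp Require Import all_boot.
From Stdlib Require Import Lia PeanoNat.
Set Implicit Arguments. Unset Strict Implicit. Unset Printing Implicit Defensive.

Lemma fiber_bound (T J : finType) (S : {set T}) (f : T -> J) (c : nat) :
  (forall x, #|[set E in S | f E == x]| <= c) -> #|S| <= #|f @: S| * c.
Proof.
move=> H; rewrite -sum1_card (partition_big f (mem (f @: S))); last first.
  by move=> i iS; apply: imset_f.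
rewrite -sum_nat_const; apply: leq_sum => x _.
rewrite sum1_card; apply: leq_trans (H x); apply: subset_leq_card.
by apply/subsetP => E; rewrite !inE.
Qed.

Lemma card_neq (K d : nat) (j : 'I_K) :
  #|[set km : 'I_K * 'I_d | km.1 != j]| = (K - 1) * d.
Proof.
have -> : [set km : 'I_K * 'I_d | km.1 != j] = setX [set~ j] setT.
  by apply/setP => -[k m]; rewrite !inE andbT.
by rewrite cardsX cardsC1 cardsT !card_ord subn1.
Qed.

Definition fxE (K d : nat) (E : ia_eqn K d) : 'I_K * 'I_d := (E.1.1.2, E.2).
Definition fyE (K d : nat) (E : ia_eqn K d) : 'I_K * 'I_d := (E.1.1.1, E.1.2).

Lemma fiberX (K d : nat) (S : {set ia_eqn K d}) (x : 'I_K * 'I_d) : S \subset ia_eqns K d ->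
  #|[set E in S | fxE E == x]| <= (K - 1) * d.
Proof.
move=> sS; rewrite -(card_neq d x.1).
apply: leq_trans (leq_imset_card (fun km : 'I_K * 'I_d => (km.1, x.1, km.2, x.2)) _).
apply: subset_leq_card; apply/subsetP => -[[[k j] m] n]; rewrite !inE => /andP[ES /eqP ex].
apply/imsetP; exists (k, m); last by rewrite -ex.
have := subsetP sS _ ES; rewrite !inE /= -ex /=.
move=> ?; by [] || (rewrite ?inE; idtac).
Qed.

Lemma fiberY (K d : nat) (S : {set ia_eqn K d}) (y : 'I_K * 'I_d) : S \subset ia_eqns K d ->
  #|[set E in S | fyE E == y]| <= (K - 1) * d.
Proof.
move=> sS; rewrite -(card_neq d y.1).
apply: leq_trans (leq_imset_card (fun jn : 'I_K * 'I_d => (y.1, jn.1, y.2, jn.2)) _).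
apply: subset_leq_card; apply/subsetP => -[[[k j] m] n]; rewrite !inE => /andP[ES /eqP ey].
apply/imsetP; exists (j, n); last by rewrite -ey.
have := subsetP sS _ ES; rewrite !inE /= -ey /= eq_sym.
move=> ?; by [] || (rewrite ?inE; idtac).
Qed.

Definition isL (A B : Type) (v : A + B) : bool := if v is inl _ then true else false.

Lemma union_bound (K M N d : nat) (S : {set ia_eqn K d}) :
  #|@fxE K d @: S| * (M - d) + #|@fyE K d @: S| * (N - d) <= #|\bigcup_(E in S) ia_varE M N E|.
Proof.
set U := \bigcup_(E in S) _.
set L := [set v : ia_var K M N d | isL v].
rewrite -(cardsID L U).
pose gX := fun (xi : ('I_K * 'I_d) * 'I_(M - d)) => (inl (xi.1.1, xi.1.2, xi.2) : ia_var K M N d).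
pose gY := fun (yi : ('I_K * 'I_d) * 'I_(N - d)) => (inr (yi.1.1, yi.1.2, yi.2) : ia_var K M N d).
have iX : injective gX by move=> [[a b] c] [[a' b'] c'] [] -> -> ->.
have iY : injective gY by move=> [[a b] c] [[a' b'] c'] [] -> -> ->.
apply: leq_add.
  rewrite -(card_ord (M - d)) -cardsT -cardsX -(card_imset _ iX).
  apply: subset_leq_card; apply/subsetP => v /imsetP [[x i] xA ->].
  move: xA; rewrite !inE /= andbT => /imsetP [[[[k j] m] n] ES ->].
  rewrite andbT; apply/bigcupP; exists (k, j, m, n) => //.
  rewrite /ia_varE !inE; apply/orP; left; apply/imsetP; by exists i.
rewrite -(card_ord (N - d)) -cardsT -cardsX -(card_imset _ iY).
apply: subset_leq_card; apply/subsetP => v /imsetP [[x i] xA ->].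
move: xA; rewrite !inE /= andbT => /imsetP [[[[k j] m] n] ES ->].
rewrite /=; apply/bigcupP; exists (k, j, m, n) => //.
rewrite /ia_varE !inE; apply/orP; right; apply/imsetP; by exists i.
Qed.

Lemma suff_proper (K M N d : nat) :
  (K - 1) * d <= (M - d) + (N - d) -> ia_proper K M N d.
Proof.
move=> H S sS.
apply: leq_trans (union_bound M N S).
have h1 := fiber_bound (fun x => fiberX x sS).
have h2 := fiber_bound (fun x => fiberY x sS).
set a := #|@fxE K d @: S| in h1 *; set b := #|@fyE K d @: S| in h2 *.
set s := #|S| in h1 h2 *; set c := (K - 1) * d in H h1 h2 *.
set p := M - d in H *; set q := N - d in H *.
clearbody a b s c p q.
case: (leqP a b) => hab; move/leP: hab => hab; move/leP: H; move/leP: h1;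
  move/leP: h2 => h2 h1 H; apply/leP; rewrite -?plusE -?multE in h1 h2 H *; nia.
Qed.

Lemma card_eqns (K d : nat) : #|ia_eqns K d| = K * (K - 1) * d * d.
Proof.
pose D := [set kj : 'I_K * 'I_K | kj.1 != kj.2].
have -> : ia_eqns K d = setX (setX D setT) setT.
  by apply/setP => -[[[k j] m] n]; rewrite !inE !andbT.
rewrite !cardsX !cardsT !card_ord.
have hD : #|D| + K = K * K.
  have <- : #|{: 'I_K * 'I_K}| = K * K by rewrite card_prod card_ord.
  rewrite -(cardsC D); congr (_ + _).
  have -> : ~: D = (fun k : 'I_K => (k, k)) @: [set: 'I_K].
    apply/setP => -[k j]; rewrite !inE negbK; apply/eqP/imsetP => [/= ->|[l _ [-> ->]]] //.
    by exists j; rewrite ?inE.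
  have inj : injective (fun k : 'I_K => (k, k)) by move=> a b [].
  by rewrite (card_imset _ inj) cardsT card_ord.
have -> : #|D| = K * (K - 1).
  by rewrite mulnBr muln1 -hD addnK.
by [].
Qed.

Lemma nec_proper (K M N d : nat) : 0 < d ->
  ia_proper K M N d -> (K - 1) * d <= (M - d) + (N - d).
Proof.
move=> d0 HP.
have := HP _ (subxx _); rewrite card_eqns => h.
have h2 := leq_trans h (max_card _).
move: h2; rewrite card_sum !card_prod !card_ord => h2.
clear HP; case: K h h2 => [|K] _ h2; first by [].
have : K.+1 * d * ((K.+1 - 1) * d) <= K.+1 * d * ((M - d) + (N - d)).
  move/leP: h2 => h2; apply/leP; rewrite -?plusE -?multE in h2 *; nia.
by rewrite leq_pmul2l // muln_gt0 d0.
Qed.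

Lemma proper_iff (K M N d : nat) : 0 < d ->
  ia_proper K M N d <-> (K - 1) * d <= (M - d) + (N - d).
Proof. by move=> d0; split; [apply: nec_proper | apply: suff_proper]. Qed.

Lemma arith1 (M N d : nat) : d <= M -> 0 < N -> d <= N - 1 ->
  M + 1 - d + (N - 1 - d) = M - d + (N - d).
Proof.
move=> /leP h0 /leP N0 /leP h; apply/eqP; rewrite eqn_leq; apply/andP; split; apply/leP;
  rewrite -?plusE -?minusE in h0 N0 h *; lia.
Qed.

Lemma arith2 (M N d : nat) : d <= N -> 0 < M -> d <= M - 1 ->
  M - 1 - d + (N + 1 - d) = M - d + (N - d).
Proof.
move=> /leP h0 /leP N0 /leP h; apply/eqP; rewrite eqn_leq; apply/andP; split; apply/leP;
  rewrite -?plusE -?minusE in h0 N0 h *; lia.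
Qed.

Theorem corollary2 (K M N d : nat) :
  2 <= K -> 0 < M -> 0 < N -> 0 < d -> d <= minn M N ->
  (d <= minn M (N - 1) -> (ia_proper K M N d <-> ia_proper K (M + 1) (N - 1) d)) /\
  (d <= minn (M - 1) N -> (ia_proper K M N d <-> ia_proper K (M - 1) (N + 1) d)).
Proof.
move=> _ M0 N0 d0 hmn; move: (hmn); rewrite leq_min => /andP[hM hN]; split; rewrite leq_min => /andP[h1 h2]; rewrite !proper_iff //.
  by rewrite arith1.
by rewrite arith2.
Qed.
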